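(* Let $n\ge 1$, let $A^*\in\mathbb{R}^{n\times n}$ and $b^*\in\mathbb{R}^n$, and consider the closed-loop affine system $\dot{x}=A^*x+b^*$ on $\mathbb{R}^n$. (This is the system $\dot{x}_m=A_mx_m+B_mu_m$ under an affine feedback with $B_mu_m=B_{m1}x_m+B_{m2}$, so that $A^*=A_m+B_{m1}$ and $b^*=B_{m2}$.) Let $R_k=\{x\in\mathbb{R}^n: a^k_j\le x_j\le b^k_j \text{ for all } j=1,\dots,n\}$ with $a^k_j<b^k_j$ for all $j$, and fix a transition direction $i\in\{1,\dots,n\}$. Let $e_{kl}=\{x\in R_k: x_i=b^k_i\}$ be the facet of $R_k$ shared with the neighbouring rectangle $R_l$, and $\overline{e_{kl}}=\{x\in R_k: x_i=a^k_i\}$ the opposite facet. Define $$C^*=\sum_{j=1,\,j\neq i}^{n}\min_{a^k_j\le y_j\le b^k_j}\big(A^*_{ij}\,y_j\big),\qquad\text{i.e. the $j$-th term is } A^*_{ij}a^k_j \text{ if } A^*_{ij}>0,\ A^*_{ij}b^k_j \text{ if } A^*_{ij}<0,\ 0 \text{ if } A^*_{ij}=0,$$ and set $x^0=a^k_i$, $x^1=b^k_i$. Assume $A^*_{ii}\neq 0$ and $A^*_{ii}y+C^*+b^*_i>0$ for all $y\in[x^0,x^1]$. Let $x(\cdot)$ be the solution with $x(0)\in\overline{e_{kl}}$, and assume that $e_{kl}$ is reached without leaving $R_k$ in the following sense: for every $t\ge 0$ such that $x_i(s)<b^k_i$ for all $s\in[0,t]$, one has $x(t)\in R_k$. Then there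 exists $t_1$ with $$0\le t_1\le T^{max}:=\frac{1}{A^*_{ii}}\ln\!\left(\frac{A^*_{ii}x^1+C^*+b^*_i}{A^*_{ii}x^0+C^*+b^*_i}\right)$$ such that $x_i(t_1)=b^k_i$, i.e. the trajectory reaches the facet $e_{kl}$ (transition $R_k\to R_l$) within time $T^{max}$.
   Context: $A^*_{ij}$ denotes the $(i,j)$ entry of $A^*$ and $b^*_i$, $x_i$ the $i$-th entries of the vectors $b^*$, $x$. The rectangles $R_k$ are cells of a partition of the workspace used to abstract an agent's motion into a weighted transition system; $T^{max}$ is used as the weight (maximum transition time) of the transition $R_k\to R_l$ across their common facet in the positive direction of coordinate $i$. *)

(* Defs.v *)
From HB Require Import structures.
From mathcomp Require Import all_boot all_order all_algebra.
From mathcomp Require Import all_classical all_reals all_analysis.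
Set Implicit Arguments. Unset Strict Implicit. Unset Printing Implicit Defensive.
Import Order.TTheory GRing.Theory Num.Theory.
Import numFieldNormedType.Exports.
Local Open Scope ring_scope.

Definition min_term (R : realType) (Aij aj bj : R) : R :=
  if 0 < Aij then Aij * aj else if Aij < 0 then Aij * bj else 0.

Definition Cstar (R : realType) (n : nat) (A : 'M[R]_n) (a b : 'I_n -> R)
  (i : 'I_n) : R :=
  \sum_(j < n | j != i) min_term (A i j) (a j) (b j).

Definition in_rect (R : realType) (n : nat) (a b : 'I_n -> R) (x : 'cV[R]_n) :=
  forall j : 'I_n, a j <= x j 0 <= b j.

Definition Tmax (R : realType) (n : nat) (A : 'M[R]_n) (bs : 'cV[R]_n)
  (a b : 'I_n -> R) (i : 'I_n) : R :=
  (A i i)^-1 * ln ((A i i * b i + Cstar A a b i + bs i 0) /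
                   (A i i * a i + Cstar A a b i + bs i 0)).

(* Main.v *)
Require Import Defs.
From HB Require Import structures.
From mathcomp Require Import all_boot all_order all_algebra.
From mathcomp Require Import all_classical all_reals all_analysis.
From mathcomp Require Import ring lra.
Import Order.TTheory GRing.Theory Num.Theory.
Import numFieldNormedType.Exports.
Local Open Scope ring_scope.

Lemma min_term_le (R : realType) (Aij aj bj y : R) :
  aj <= y <= bj -> min_term Aij aj bj <= Aij * y.
Proof.
move=> /andP[h1 h2]; rewrite /min_term.
case: ltrP => H1; first by rewrite ler_pM2l.
case: ltrP => H2; first by rewrite ler_nM2l.
have -> : Aij = 0 by apply/le_anti; rewrite H1 H2.
by rewrite mul0r.
Qed.

Lemma deriv_lb (R : realType) (n : nat) (A : 'M[R]_n) (bs : 'cV[R]_n)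
  (a b : 'I_n -> R) (i : 'I_n) (z : 'cV[R]_n) :
  in_rect a b z ->
  A i i * z i 0 + Cstar A a b i + bs i 0 <= (A *m z + bs) i 0.
Proof.
move=> hz; rewrite !mxE (bigD1 i) //= lerD2r lerD2l /Cstar.
by apply: ler_sum => j _; apply: min_term_le.
Qed.

Theorem theorem1 (R : realType) (n : nat) (A : 'M[R]_n) (bs : 'cV[R]_n)
  (a b : 'I_n -> R) (i : 'I_n) (x : R -> 'cV[R]_n) :
  (forall j, a j < b j) ->
  (* x solves xdot = A^* x + b^* *)
  (forall (t : R) (j : 'I_n),
     is_derive t 1 (fun s => x s j 0) ((A *m x t + bs) j 0)) ->
  A i i != 0 ->
  (forall y : R, a i <= y <= b i -> 0 < A i i * y + Cstar A a b i + bs i 0) ->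
  (* x(0) lies on the opposite facet of R_k *)
  in_rect a b (x 0) -> x 0 i 0 = a i ->
  (* e_kl is reached without leaving R_k *)
  (forall t : R, 0 <= t -> (forall s : R, 0 <= s <= t -> x s i 0 < b i) ->
     in_rect a b (x t)) ->
  exists t1 : R, 0 <= t1 <= Tmax A bs a b i /\ x t1 i 0 = b i.
Proof.
move=> hab hder hA hpos hx0r hx0 hstay.
set al := A i i in hA hpos *.
set K := Cstar A a b i + bs i 0.
set f := fun s => x s i 0.
have hpos' y : a i <= y <= b i -> 0 < al * y + K.
  by move=> /hpos; rewrite /K addrA.
have hab' := hab i.
have ga : 0 < al * a i + K by apply: hpos'; rewrite lexx ltW.
have gb : 0 < al * b i + K by apply: hpos'; rewrite lexx ltW.
set r := (al * b i + K) / (al * a i + K).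
have r0 : 0 < r by rewrite divr_gt0.
set T := Tmax A bs a b i.
have TE : T = al^-1 * ln r by rewrite /T /Tmax /r /K !addrA.
have alT : al * T = ln r by rewrite TE mulrA mulfV // mul1r.
have T0 : 0 < T.
  rewrite TE; case: (ltrP 0 al) => Hal.
    rewrite mulr_gt0 ?invr_gt0 // ln_gt0 // /r ltr_pdivlMr // mul1r.
    by rewrite ltrD2r ltr_pM2l.
  have Hal' : al < 0 by rewrite lt_neqAle hA Hal.
  rewrite nmulr_rgt0 ?invr_lt0 // ln_lt0 // r0 /r ltr_pdivrMr // mul1r.
  by rewrite ltrD2r ltr_nM2l.
have fcont : continuous f.
  move=> t; apply/differentiable_continuous/derivable1_diffP.
  by case: (hder t i).
have [[s0 Hs0 Hfs0]|Hno] := pselect (exists2 s, 0 <= s <= T & b i <= f s).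
  have /andP[s00 s0T] := Hs0.
  have [||c cin fc] := @IVT R f 0 s0 (b i) s00.
  - by apply: continuous_subspaceT => t; exact: fcont.
  - rewrite ge_min le_max Hfs0 orbT andbT.
    by rewrite /f hx0 ltW.
  exists c; split => //.
  move: cin; rewrite in_itv /= => /andP[c0 cs0].
  by rewrite c0 (le_trans cs0 s0T).
have hlt s : 0 <= s <= T -> f s < b i.
  by move=> hs; rewrite ltNge; apply/negP => H; apply: Hno; exists s.
set E := fun s => expR (- al * s).
set c0 := K / al.
set psi := fun s => (f s + c0) * E s.
have dlin (s : R) : is_derive s 1 (fun s : R => - al * s) (- al).
  have := is_deriveZ (- al) ((@is_derive_id R R^o s 1)).
  by rewrite /= scaler1.
have dE (s : R) : is_derive s 1 E (expR (- al * s) * (- al)).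
  exact: (@is_derive1_comp R expR (fun s => - al * s)).
have dF (s : R) : is_derive s 1 (fun s => f s + c0) ((A *m x s + bs) i 0).
  have := is_deriveD (hder s i) (@is_derive_cst R R^o R^o c0 s 1).
  by rewrite addr0.
have dpsi (s : R) : is_derive s 1 psi
    ((f s + c0) * (E s * - al) + E s * (A *m x s + bs) i 0).
  exact: (is_deriveM (dF s) (dE s)).
have [|c cin ceq] := MVT T0 (fun c _ => dpsi c).
  apply: continuous_subspaceT => t.
  apply/differentiable_continuous/derivable1_diffP.
  by case: (dpsi t).
have /andP[c0' cT] : 0 < c < T by move: cin; rewrite in_itv.
have hrect : in_rect a b (x c).
  apply: hstay; first exact: ltW.
  move=> s /andP[s0 sc]; apply: hlt; rewrite s0 /=.
  exact: le_trans sc (ltW cT).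
have hlb := @deriv_lb R n A bs a b i (x c) hrect.
have Ec : 0 < E c by exact: expR_gt0.
have hmono : psi 0 <= psi T.
  rewrite -subr_ge0 ceq subr0; apply: mulr_ge0; last exact: ltW.
  have -> : (f c + c0) * (E c * - al) + E c * (A *m x c + bs) i 0 =
     E c * ((A *m x c + bs) i 0 - (al * x c i 0 + Cstar A a b i + bs i 0)).
    rewrite /c0 /K /f; field; exact: hA.
  by apply: mulr_ge0; [exact: ltW | rewrite subr_ge0].
have ET : E T = r^-1.
  by rewrite /E mulNr alT expRN lnK // posrE.
have E0 : E 0 = 1 by rewrite /E mulr0 expR0.
move: hmono; rewrite /psi ET E0 mulr1 => hm.
have key : b i + c0 <= f T + c0.
  have -> : b i + c0 = (a i + c0) * r.
    rewrite /r /c0; field; apply/andP; split => //; exact: lt0r_neq0.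
  by rewrite -ler_pdivlMr //; move: hm; rewrite /f hx0.
have := hlt T; rewrite (ltW T0) lexx => /(_ isT).
by rewrite ltNge -(lerD2r c0) key.
Qed.
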